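(* There is an absolute constant $C$ such that for every string $T$ of length $n$, every positive integer $d<n$, and every $i$ with $1\le i\le n-d$, $|\mathsf{MUS}(T[i..i+d-1])\bigtriangleup\mathsf{MUS}(T[i+1..i+d])|\le C$, i.e., this quantity is $O(1)$.
   Context: $T[a..b]$ denotes the substring of $T$ from position $a$ to $b$. For a string $S$ and a string $w$, $\#\mathit{occ}_S(w)$ is the number of positions at which $w$ occurs in $S$; by convention $\#\mathit{occ}_S(\varepsilon)=|S|+1$. A substring $w$ of $S$ is unique in $S$ if $\#\mathit{occ}_S(w)=1$ and repeating in $S$ if $\#\mathit{occ}_S(w)\ge 2$. For $1\le i\le j\le n$, $\mathsf{MUS}(T[i..j])$ is the set of intervals $[s,t]$ (positions in $T$) with $i\le s\le t\le j$ such that $T[s..t]$ is unique in $T[i..j]$ and every proper substring of $T[s..t]$ (including the empty string) is repeating in $T[i..j]$. $\bigtriangleup$ denotes symmetric difference. *)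

(* Defs.v *)
From mathcomp Require Import all_boot.
Set Implicit Arguments. Unset Strict Implicit. Unset Printing Implicit Defensive.

(* Strings are sequences over an arbitrary alphabet (eqType).
   Positions are 1-indexed as in the paper. *)

Definition substr (A : eqType) (T : seq A) (a b : nat) : seq A :=
  take (b.+1 - a) (drop a.-1 T).

(* #occ_S(w): number of positions at which w occurs in S.
   For w = [::] this yields |S|+1, matching the paper's convention. *)
Definition occ (A : eqType) (S w : seq A) : nat :=
  count (fun p => take (size w) (drop p S) == w) (iota 0 (size S - size w).+1)
  * (size w <= size S).

Definition unique_in (A : eqType) (S w : seq A) : bool := occ S w == 1.
Definition repeating_in (A : eqType) (S w : seq A) : bool := 2 <= occ S w.

Definition proper_subs_repeating (A : eqType) (S w : seq A) : bool :=
  all (fun a => all (fun l => (a + l <= size w) ==> repeating_in S (take l (drop a w)))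
                    (iota 0 (size w)))
      (iota 0 (size w).+1).

Definition is_mus (A : eqType) (T : seq A) (i j s t : nat) : bool :=
  [&& i <= s, s <= t, t <= j,
      unique_in (substr T i j) (substr T s t) &
      proper_subs_repeating (substr T i j) (substr T s t)].

Definition MUS (A : eqType) (T : seq A) (i j : nat) : seq (nat * nat) :=
  [seq p <- [seq (s, t) | s <- iota i (j.+1 - i), t <- iota i (j.+1 - i)]
     | is_mus T i j p.1 p.2].

Definition symdiff (X : eqType) (s1 s2 : seq X) : seq X :=
  [seq x <- s1 | x \notin s2] ++ [seq x <- s2 | x \notin s1].

(* Main.v *)
Require Import Defs.
From mathcomp Require Import all_boot.
From mathcomp Require Import zify.
From Stdlib Require Import Classical ClassicalEpsilon.
Set Implicit Arguments. Unset Strict Implicit. Unset Printing Implicit Defensive.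

Definition mt {A : Type} (f : nat -> A) p q n := forall k, k < n -> f (p+k) = f (q+k).
Definition oc {A : Type} (f : nat -> A) l r q n p := l <= p /\ p + n <= r.+1 /\ mt f p q n.
Definition un {A : Type} (f : nat -> A) l r q n := forall p, oc f l r q n p -> p = q.
Definition rp {A : Type} (f : nat -> A) l r q n := exists p, p <> q /\ oc f l r q n p.
Definition mus {A : Type} (f : nat -> A) l r s t :=
  [/\ l <= s, s <= t, t <= r, un f l r s (t.+1 - s) &
      forall a n, a + n <= t.+1 - s -> n < t.+1 - s -> rp f l r (s+a) n].

Lemma mt_sub A (f : nat -> A) p q n a m p' q' :
  mt f p q n -> a + m <= n -> p' = p + a -> q' = q + a -> mt f p' q' m.
Proof. move=> H h -> -> k km; rewrite -!addnA; apply: H; lia. Qed.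

Lemma mt_trans A (f : nat -> A) p q q' n : mt f p q n -> mt f q' q n -> mt f p q' n.
Proof. move=> H1 H2 k kn; by rewrite H1 // H2. Qed.

Lemma mt_eq A (f : nat -> A) p q q' n : mt f p q n -> mt f p q' n -> mt f q q' n.
Proof. move=> H1 H2 k kn; by rewrite -H1 // H2. Qed.

Lemma mt_refl A (f : nat -> A) p n : mt f p p n.
Proof. by []. Qed.

Lemma nonest A (f : nat -> A) l r s1 t1 s2 t2 :
  mus f l r s1 t1 -> mus f l r s2 t2 -> s2 <= s1 -> t1 <= t2 -> (s1, t1) = (s2, t2).
Proof.
case=> h1 h2 h3 U1 _ [g1 g2 g3 _ R2] le1 le2.
case: (classic (s1 = s2 /\ t1 = t2)) => [[-> ->] //|ne].
have := R2 (s1 - s2) (t1.+1 - s1) ltac:(lia) ltac:(lia).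
have -> : s2 + (s1 - s2) = s1 by lia.
by case=> p [pn /U1].
Qed.

Definition Rrem {A : Type} (f : nat -> A) l r (x : nat * nat) :=
  mus f l r x.1 x.2 /\ exists p, p + (x.2.+1 - x.1) = r.+2 /\ mt f p x.1 (x.2.+1 - x.1).
Definition Rend {A : Type} (f : nat -> A) l r (x : nat * nat) :=
  mus f l r.+1 x.1 x.2 /\ x.2 = r.+1.
Definition RX {A : Type} (f : nat -> A) l r (x : nat * nat) :=
  [/\ mus f l r.+1 x.1 x.2, x.2 <= r, un f l r x.1.+1 (x.2 - x.1) &
     exists p, p + (x.2 - x.1) = r.+2 /\ mt f p x.1.+1 (x.2 - x.1)].
Definition RY {A : Type} (f : nat -> A) l r (x : nat * nat) :=
  [/\ mus f l r.+1 x.1 x.2, x.2 <= r, un f l r x.1 (x.2 - x.1) &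
     exists p, p + (x.2 - x.1) = r.+2 /\ mt f p x.1 (x.2 - x.1)].

Definition Lrem {A : Type} (f : nat -> A) l r (x : nat * nat) :=
  mus f l.+1 r x.1 x.2 /\ mt f l x.1 (x.2.+1 - x.1).
Definition Lstart {A : Type} (f : nat -> A) l r (x : nat * nat) :=
  mus f l r x.1 x.2 /\ x.1 = l.
Definition LX {A : Type} (f : nat -> A) l r (x : nat * nat) :=
  [/\ mus f l r x.1 x.2, l < x.1, un f l.+1 r x.1 (x.2 - x.1) & mt f l x.1 (x.2 - x.1)].
Definition LY {A : Type} (f : nat -> A) l r (x : nat * nat) :=
  [/\ mus f l r x.1 x.2, l < x.1, un f l.+1 r x.1.+1 (x.2 - x.1) & mt f l x.1.+1 (x.2 - x.1)].

Lemma right_rem A (f : nat -> A) l r s t :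
  mus f l r s t -> ~ mus f l r.+1 s t -> Rrem f l r (s, t).
Proof.
case=> h1 h2 h3 U R N; split => //=.
apply: NNPP => C; apply: N; split => //; first lia.
- move=> p [o1 [o2 o3]]; apply: NNPP => pn; apply: C; exists p; split; last by [].
  have : ~ (p + (t.+1 - s) <= r.+1).
    by move=> o2'; apply: pn; apply: U.
  lia.
- move=> a n H1 H2; case: (R a n H1 H2) => p [pn [o1 [o2 o3]]].
  exists p; split => //; split; [lia|split; [lia|by []]].
Qed.

Lemma left_rem A (f : nat -> A) l r s t :
  mus f l.+1 r s t -> ~ mus f l r s t -> Lrem f l r (s, t).
Proof.
case=> h1 h2 h3 U R N; split => //=.
apply: NNPP => C; apply: N; split => //; first lia.
- move=> p [o1 [o2 o3]]; apply: NNPP => pn.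
  have : ~ (l.+1 <= p) by move=> o1'; apply: pn; apply: U.
  move=> h; have ep : p = l by lia.
  by apply: C; rewrite -ep.
- move=> a n H1 H2; case: (R a n H1 H2) => p [pn [o1 [o2 o3]]].
  exists p; split => //; split; [lia|split; [lia|by []]].
Qed.

Lemma exists_bad A (f : nat -> A) l r s t :
  l <= s -> s <= t -> t <= r -> un f l r s (t.+1 - s) -> ~ mus f l r s t ->
  exists a n, [/\ a + n <= t.+1 - s, n < t.+1 - s & forall p, oc f l r (s+a) n p -> p = s + a].
Proof.
move=> h1 h2 h3 U N; apply: NNPP => C; apply: N; split => // a n H1 H2.
apply: NNPP => C2; apply: C; exists a, n; split => // p o.
apply: NNPP => pn; apply: C2; by exists p.
Qed.

Lemma right_add A (f : nat -> A) l r s t :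
  mus f l r.+1 s t -> ~ mus f l r s t -> [\/ Rend f l r (s, t), RX f l r (s, t) | RY f l r (s, t)].
Proof.
move=> M N; case: (M) => h1 h2 h3 U R.
case: (ltngtP t r.+1) => [ht|ht|ht]; last by apply: Or31.
- have U' : un f l r s (t.+1 - s).
    move=> p [o1 [o2 o3]]; apply: U; split => //; split => //; lia.
  have h3' : t <= r by lia.
  have [a [n [H1 H2 Un]]] := exists_bad h1 h2 h3' U' N.
  case: (posnP a) => [a0|apos].
  +
    subst a; rewrite addn0 in Un.
    have := R 0 (t - s) ltac:(lia) ltac:(lia); rewrite addn0.
    case=> p [pn [o1 [o2 o3]]].
    have mq : mt f p s n by apply: (mt_sub (a:=0) o3); lia.
    have hn : p + n = r.+2.
      apply: NNPP => C; apply: pn; apply: Un; split => //; split => //; lia.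
    have en : n = t - s by lia.
    subst n; apply: Or33; split; [exact: M|simpl; lia|exact: Un|by exists p].
  + have := R 1 (t - s) ltac:(lia) ltac:(lia); rewrite addn1.
    case=> p [pn [o1 [o2 o3]]].
    have mq : mt f (p + (a - 1)) (s + a) n by apply: (mt_sub (a:=a-1) o3); lia.
    have hn : p + (a - 1) + n = r.+2.
      apply: NNPP => C; have := Un (p + (a-1)); rewrite /oc.
      move=> H; have := H ltac:(split; [lia|split; [lia|exact: mq]]); lia.
    apply: Or32; split; [exact: M|simpl; lia| |exists p; simpl; split => //; lia].
    rewrite /un /=; move=> p' [q1 [q2 q3]].
    have o : oc f l r (s+a) n (p' + (a-1)).
      split; [lia|split; [lia|]]; apply: (mt_sub (a:=a-1) q3); lia.
    have := Un _ o; lia.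
- lia.
Qed.

Lemma left_add A (f : nat -> A) l r s t :
  mus f l r s t -> ~ mus f l.+1 r s t -> [\/ Lstart f l r (s, t), LX f l r (s, t) | LY f l r (s, t)].
Proof.
move=> M N; case: (M) => h1 h2 h3 U R.
case: (ltngtP l s) => [hs|hs|hs]; last by apply: Or31; split.
- have U' : un f l.+1 r s (t.+1 - s).
    move=> p [o1 [o2 o3]]; apply: U; split; [lia|split; [lia|by []]].
  have [a [n [H1 H2 Un]]] := exists_bad hs h2 h3 U' N.
  case: (ltnP (a + n) (t.+1 - s)) => [lt|ge].
  + have := R 0 (t - s) ltac:(lia) ltac:(lia); rewrite addn0.
    case=> p [pn [o1 [o2 o3]]].
    have mq : mt f (p + a) (s + a) n by apply: (mt_sub (a:=a) o3); lia.
    have hq : p + a = l.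
      apply: NNPP => C; apply: pn.
      have o : oc f l.+1 r (s+a) n (p + a) by split; [lia|split; [lia|exact: mq]].
      have := Un _ o; lia.
    have ep : p = l by lia.
    have a0 : a = 0 by lia.
    subst a p.
    apply: Or32; split; [exact: M|simpl; lia| |by []].
    rewrite /un /=; move=> p' [q1 [q2 q3]].
    have o : oc f l.+1 r (s+0) n p'.
      split; [lia|split; [lia|]]; apply: (mt_sub (a:=0) q3); lia.
    have := Un _ o; lia.
  + have := R 1 (t - s) ltac:(lia) ltac:(lia); rewrite addn1.
    case=> p [pn [o1 [o2 o3]]].
    have mq : mt f (p + (a - 1)) (s + a) n by apply: (mt_sub (a:=a-1) o3); lia.
    have hq : p + (a - 1) = l.
      apply: NNPP => C; apply: pn.
      have o : oc f l.+1 r (s+a) n (p + (a-1)) by split; [lia|split; [lia|exact: mq]].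
      have := Un _ o; lia.
    have ep : p = l by lia.
    subst p.
    apply: Or33; split; [exact: M|simpl; lia| |by []].
    rewrite /un /=; move=> p' [q1 [q2 q3]].
    have o : oc f l.+1 r (s+a) n (p' + (a-1)).
      split; [lia|split; [lia|]]; apply: (mt_sub (a:=a-1) q3); lia.
    have := Un _ o; lia.
- lia.
Qed.

Lemma subsing_by (X : Type) (P : X -> Prop) (L : X -> nat) :
  (forall x y, P x -> P y -> L x <= L y -> x = y) -> forall x y, P x -> P y -> x = y.
Proof.
move=> H x y Px Py; case: (leqP (L x) (L y)) => h; first exact: H.
by symmetry; apply: H => //; apply: ltnW.
Qed.

Definition ssing {X : Type} (P : X -> Prop) := forall x y, P x -> P y -> x = y.

Lemma Rrem_ss A (f : nat -> A) l r : ssing (Rrem f l r).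
Proof.
apply: (subsing_by (L := fun x => x.2.+1 - x.1)) => [[s1 t1] [s2 t2]] /=.
move=> [M1 [p1 [e1 m1]]] [M2 [p2 [e2 m2]]] le; simpl in *.
case: (M1) => a1 b1 c1 U1 _; case: (M2) => a2 b2 c2 _ _.
have m : mt f p1 (s2 + (t2.+1 - s2 - (t1.+1 - s1))) (t1.+1 - s1).
  by apply: (mt_sub (a := t2.+1 - s2 - (t1.+1 - s1)) m2); lia.
have o : oc f l r s1 (t1.+1 - s1) (s2 + (t2.+1 - s2 - (t1.+1 - s1))).
  split; [lia|split; [lia|]]; exact: (mt_eq m m1).
have := U1 _ o => e.
apply: nonest M1 M2 _ _; lia.
Qed.

Lemma Rend_ss A (f : nat -> A) l r : ssing (Rend f l r).
Proof.
apply: (subsing_by (L := fun x => x.2.+1 - x.1)) => [[s1 t1] [s2 t2]] /=.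
move=> [M1 e1] [M2 e2] le; simpl in *.
case: (M1) => a1 b1 c1 U1 _; case: (M2) => a2 b2 c2 _ _.
apply: nonest M1 M2 _ _; lia.
Qed.

Lemma RX_ss A (f : nat -> A) l r : ssing (RX f l r).
Proof.
apply: (subsing_by (L := fun x => x.2 - x.1)) => [[s1 t1] [s2 t2]] /=.
move=> [M1 d1 U1 [p1 [e1 m1]]] [M2 d2 U2 [p2 [e2 m2]]] le; simpl in *.
case: (M1) => a1 b1 c1 _ _; case: (M2) => a2 b2 c2 _ _.
have m : mt f p1 (s2.+1 + (t2 - s2 - (t1 - s1))) (t1 - s1).
  by apply: (mt_sub (a := t2 - s2 - (t1 - s1)) m2); lia.
have o : oc f l r s1.+1 (t1 - s1) (s2.+1 + (t2 - s2 - (t1 - s1))).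
  split; [lia|split; [lia|]]; exact: (mt_eq m m1).
have := U1 _ o => e.
apply: nonest M1 M2 _ _; lia.
Qed.

Lemma RY_ss A (f : nat -> A) l r : ssing (RY f l r).
Proof.
apply: (subsing_by (L := fun x => x.2 - x.1)) => [[s1 t1] [s2 t2]] /=.
move=> [M1 d1 U1 [p1 [e1 m1]]] [M2 d2 U2 [p2 [e2 m2]]] le; simpl in *.
case: (M1) => a1 b1 c1 _ _; case: (M2) => a2 b2 c2 _ _.
have m : mt f p1 (s2 + (t2 - s2 - (t1 - s1))) (t1 - s1).
  by apply: (mt_sub (a := t2 - s2 - (t1 - s1)) m2); lia.
have o : oc f l r s1 (t1 - s1) (s2 + (t2 - s2 - (t1 - s1))).
  split; [lia|split; [lia|]]; exact: (mt_eq m m1).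
have := U1 _ o => e.
apply: nonest M1 M2 _ _; lia.
Qed.

Lemma Lrem_ss A (f : nat -> A) l r : ssing (Lrem f l r).
Proof.
apply: (subsing_by (L := fun x => x.2.+1 - x.1)) => [[s1 t1] [s2 t2]] /=.
move=> [M1 m1] [M2 m2] le; simpl in *.
case: (M1) => a1 b1 c1 U1 _; case: (M2) => a2 b2 c2 _ _.
have m : mt f l s2 (t1.+1 - s1) by apply: (mt_sub (a := 0) m2); lia.
have o : oc f l.+1 r s1 (t1.+1 - s1) s2.
  split; [lia|split; [lia|]]; exact: (mt_eq m m1).
have := U1 _ o => e.
apply: nonest M1 M2 _ _; lia.
Qed.

Lemma Lstart_ss A (f : nat -> A) l r : ssing (Lstart f l r).
Proof.
apply: (subsing_by (L := fun x => x.2.+1 - x.1)) => [[s1 t1] [s2 t2]] /=.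
move=> [M1 e1] [M2 e2] le; simpl in *.
case: (M1) => a1 b1 c1 U1 _; case: (M2) => a2 b2 c2 _ _.
apply: nonest M1 M2 _ _; lia.
Qed.

Lemma LX_ss A (f : nat -> A) l r : ssing (LX f l r).
Proof.
apply: (subsing_by (L := fun x => x.2 - x.1)) => [[s1 t1] [s2 t2]] /=.
move=> [M1 d1 U1 m1] [M2 d2 U2 m2] le; simpl in *.
case: (M1) => a1 b1 c1 _ _; case: (M2) => a2 b2 c2 _ _.
have m : mt f l s2 (t1 - s1) by apply: (mt_sub (a := 0) m2); lia.
have o : oc f l.+1 r s1 (t1 - s1) s2.
  split; [lia|split; [lia|]]; exact: (mt_eq m m1).
have := U1 _ o => e.
apply: nonest M1 M2 _ _; lia.
Qed.

Lemma LY_ss A (f : nat -> A) l r : ssing (LY f l r).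
Proof.
apply: (subsing_by (L := fun x => x.2 - x.1)) => [[s1 t1] [s2 t2]] /=.
move=> [M1 d1 U1 m1] [M2 d2 U2 m2] le; simpl in *.
case: (M1) => a1 b1 c1 _ _; case: (M2) => a2 b2 c2 _ _.
have m : mt f l s2.+1 (t1 - s1) by apply: (mt_sub (a := 0) m2); lia.
have o : oc f l.+1 r s1.+1 (t1 - s1) s2.+1.
  split; [lia|split; [lia|]]; exact: (mt_eq m m1).
have := U1 _ o => e.
apply: nonest M1 M2 _ _; lia.
Qed.

Definition decb (P : Prop) : bool := if excluded_middle_informative P then true else false.
Lemma decbP (P : Prop) : reflect P (decb P).
Proof. rewrite /decb; case: excluded_middle_informative => h; by constructor. Qed.

Lemma size_le1 (X : eqType) (s : seq X) :
  uniq s -> (forall x y, x \in s -> y \in s -> x = y) -> size s <= 1.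
Proof.
case: s => [|x [|y s']] //= /andP [nx _] H.
have e := H x y (mem_head _ _) ltac:(by rewrite !inE eqxx orbT).
by move: nx; rewrite e mem_head.
Qed.

Lemma count_ss (X : eqType) (Q : nat -> X -> Prop) k (s : seq X) :
  uniq s -> (forall x, x \in s -> exists2 m, m < k & Q m x) -> (forall m, ssing (Q m)) ->
  size s <= k.
Proof.
elim: k s => [|k IH] s us H S.
  case: s us H => [//|x s'] _ H; by case: (H x (mem_head _ _)).
rewrite -(count_predC (fun x => decb (Q k x))).
have -> : k.+1 = 1 + k by [].
apply: leq_add.
  rewrite -size_filter; apply: size_le1; first exact: filter_uniq.
  move=> x y; rewrite !mem_filter => /andP [/decbP hx _] /andP [/decbP hy _].
  exact: (S k).
rewrite -size_filter; apply: IH => //; first exact: filter_uniq.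
move=> x; rewrite mem_filter => /andP [/= /decbP nq xs].
case: (H x xs) => m mk qm; exists m => //.
case: (ltngtP m k) => e //.
  by move: mk; rewrite ltnS leqNgt e.
by move: qm; rewrite e.
Qed.

Lemma substrE (A : eqType) (x0 : A) T a b : 1 <= a -> b <= size T ->
  substr T a b = mkseq (fun k => nth x0 T (a + k).-1) (b.+1 - a).
Proof.
move=> ha hb; rewrite /substr.
have hs : size (take (b.+1-a) (drop a.-1 T)) = b.+1 - a by rewrite size_takel // size_drop; lia.
apply: (@eq_from_nth _ x0); first by rewrite hs size_mkseq.
move=> k; rewrite hs => hk.
rewrite nth_take; last lia.
rewrite nth_drop nth_mkseq; last lia.
congr nth; lia.
Qed.

Lemma take_drop_mk (T' : Type) (g : nat -> T') m n a : a + n <= m ->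
  take n (drop a (mkseq g m)) = mkseq (fun k => g (a + k)) n.
Proof.
move=> h.
have hs : size (take n (drop a (mkseq g m))) = n by rewrite size_takel // size_drop size_mkseq; lia.
apply: (@eq_from_nth _ (g 0)); first by rewrite hs size_mkseq.
move=> k; rewrite hs => hk.
rewrite nth_take; last lia.
rewrite nth_drop !nth_mkseq //; lia.
Qed.

Lemma mkseq_eqP (A : eqType) (g h : nat -> A) n :
  reflect (forall k, k < n -> g k = h k) (mkseq g n == mkseq h n).
Proof.
apply: (iffP eqP) => [E k kn|E].
  by have := congr1 (fun s => nth (g 0) s k) E; rewrite /= !nth_mkseq.
apply: (@eq_from_nth _ (g 0)); rewrite !size_mkseq // => k kn.
by rewrite !nth_mkseq // E.
Qed.

Lemma occ_mk (A : eqType) (g h : nat -> A) m n : n <= m ->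
  occ (mkseq g m) (mkseq h n) =
  count (fun p => mkseq (fun k => g (p + k)) n == mkseq h n) (iota 0 (m - n).+1).
Proof.
move=> H; rewrite /occ !size_mkseq H muln1; apply: eq_in_count => p.
rewrite mem_iota => /andP [_ hp]; rewrite take_drop_mk //; lia.
Qed.

Lemma count1 (X : eqType) (P : pred X) s x : uniq s -> x \in s -> P x ->
  count P s = (count (fun y => P y && (y != x)) s).+1.
Proof.
move=> us xs px.
rewrite -size_filter -(count_predC (pred1 x)) !count_filter.
have -> : count (predI (pred1 x) P) s = count (pred1 x) s.
  apply: eq_count => y /=; case: eqP => // ->; by rewrite px.
rewrite (count_uniq_mem _ us) xs add1n; congr S.
apply: eq_count => y /=; by rewrite andbC.
Qed.

Lemma core_bridge (A : eqType) (f : nat -> A) l r q n : l <= q -> q + n <= r.+1 ->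
  exists c, occ (mkseq (fun k => f (l + k)) (r.+1 - l)) (mkseq (fun k => f (q + k)) n) = c.+1
            /\ ((0 < c) <-> rp f l r q n).
Proof.
move=> h1 h2; rewrite occ_mk; last lia.
set P := (fun p => _ == _).
have Px : P (q - l).
  apply/mkseq_eqP => k kn; congr f; lia.
rewrite (count1 (x := q - l) (iota_uniq _ _)) //; last by rewrite mem_iota; lia.
eexists; split; first reflexivity.
rewrite -has_count; split.
  case/hasP => p; rewrite mem_iota => hp /andP [/mkseq_eqP Pp pn].
  exists (l + p); split; first lia.
  split; first lia. split; first lia.
  move=> k kn; rewrite -addnA; exact: Pp.
case=> p [pn [o1 [o2 o3]]]; apply/hasP; exists (p - l).
  rewrite mem_iota; lia.
apply/andP; split; last lia.
apply/mkseq_eqP => k kn; have := o3 k kn; have -> : l + (p - l + k) = p + k by lia.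
by [].
Qed.

Lemma uniq_bridge (A : eqType) (f : nat -> A) l r q n : l <= q -> q + n <= r.+1 ->
  unique_in (mkseq (fun k => f (l + k)) (r.+1 - l)) (mkseq (fun k => f (q + k)) n) <-> un f l r q n.
Proof.
move=> h1 h2; have [c [e E]] := core_bridge f h1 h2.
rewrite /unique_in e eqSS; split.
  move=> /eqP c0 p o; case: (p =P q) => // pn.
  have : 0 < c by apply/E; exists p.
  lia.
move=> U; apply/eqP; case: (posnP c) => // /E [p [pn o]].
by case: pn; apply: U.
Qed.

Lemma rep_bridge (A : eqType) (f : nat -> A) l r q n : l <= q -> q + n <= r.+1 ->
  repeating_in (mkseq (fun k => f (l + k)) (r.+1 - l)) (mkseq (fun k => f (q + k)) n) <-> rp f l r q n.
Proof.
move=> h1 h2; have [c [e E]] := core_bridge f h1 h2.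
by rewrite /repeating_in e ltnS.
Qed.

Lemma subs_bridge (A : eqType) (f : nat -> A) l r s L : l <= s -> s + L <= r.+1 ->
  proper_subs_repeating (mkseq (fun k => f (l + k)) (r.+1 - l)) (mkseq (fun k => f (s + k)) L)
  <-> (forall a n, a + n <= L -> n < L -> rp f l r (s + a) n).
Proof.
move=> h1 h2; rewrite /proper_subs_repeating size_mkseq.
have E : forall a n, a + n <= L ->
   take n (drop a (mkseq (fun k => f (s + k)) L)) = mkseq (fun k => f (s + a + k)) n.
  move=> a n h; rewrite take_drop_mk //; apply: eq_mkseq => k; by rewrite addnA.
split.
  move=> H a n ha hn.
  have := allP H a ltac:(rewrite mem_iota; lia) => /allP /(_ n ltac:(rewrite mem_iota; lia)).
  move=> /implyP /(_ ha); rewrite E //; move/rep_bridge; apply; lia.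
move=> H; apply/allP => a ha; apply/allP => n; rewrite mem_iota => hn.
apply/implyP => h; rewrite E //; apply/rep_bridge; [lia|lia|].
apply: H => //; lia.
Qed.

Lemma is_mus_bridge (A : eqType) (x0 : A) T l r s t : 1 <= l -> r <= size T ->
  is_mus T l r s t <-> mus (fun p => nth x0 T p.-1) l r s t.
Proof.
move=> hl hr; split.
  case/and5P => h1 h2 h3; rewrite (substrE x0) // (substrE x0) //; try lia.
  move=> hu hp; split => //.
    have h4 : s + (t.+1 - s) <= r.+1 by lia.
    have [H _] := uniq_bridge (fun p => nth x0 T p.-1) h1 h4; exact: H.
  have h4 : s + (t.+1 - s) <= r.+1 by lia.
  have [H _] := subs_bridge (fun p => nth x0 T p.-1) h1 h4; exact: H.
case=> h1 h2 h3 U R; apply/and5P; split => //; rewrite (substrE x0) // (substrE x0) //; try lia.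
  have h4 : s + (t.+1 - s) <= r.+1 by lia.
  have [_ H] := uniq_bridge (fun p => nth x0 T p.-1) h1 h4; exact: H.
have h4 : s + (t.+1 - s) <= r.+1 by lia.
have [_ H] := subs_bridge (fun p => nth x0 T p.-1) h1 h4; exact: H.
Qed.

Lemma memMUS (A : eqType) (T : seq A) l r s t : ((s, t) \in MUS T l r) = is_mus T l r s t.
Proof.
rewrite /MUS mem_filter /=; case H: (is_mus T l r s t) => //=.
case/and5P: H => h1 h2 h3 _ _.
apply/allpairsP; exists (s, t); rewrite /= !mem_iota; split => //; lia.
Qed.

Lemma uniqMUS (A : eqType) (T : seq A) l r : uniq (MUS T l r).
Proof.
apply: filter_uniq; apply: allpairs_uniq; try exact: iota_uniq.
by move=> [a b] [c d] _ _ /= [-> ->].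
Qed.

Theorem corollary1 :
  exists C : nat, forall (A : eqType) (T : seq A) (d i : nat),
    0 < d -> d < size T -> 1 <= i -> i <= size T - d ->
    size (symdiff (MUS T i (i + d - 1)) (MUS T i.+1 (i + d))) <= C.
Proof.
exists 8 => A T d i hd hdT hi hiT.
case: T hdT hiT => [//|x0 T'] hdT hiT.
set T := x0 :: T' in hdT hiT *.
set f := fun p => nth x0 T p.-1.
set j := i + d - 1.
have ej : i + d = j.+1 by rewrite /j; lia.
rewrite ej.
have hj : j.+1 <= size T by rewrite -ej; lia.
have BA : forall s t, (s, t) \in MUS T i j <-> mus f i j s t.
  move=> s t; rewrite memMUS; apply: is_mus_bridge => //; lia.
have BB : forall s t, (s, t) \in MUS T i.+1 j.+1 <-> mus f i.+1 j.+1 s t.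
  move=> s t; rewrite memMUS; apply: is_mus_bridge => //; lia.
rewrite /symdiff size_cat.
have -> : 8 = 4 + 4 by [].
apply: leq_add.
- apply: (count_ss (k := 4) (Q := fun m x => match m with
     | 0 => Rrem f i.+1 j x | 1 => Lstart f i j x | 2 => LX f i j x | _ => LY f i j x end)).
  + exact/filter_uniq/uniqMUS.
  + move=> [s t]; rewrite mem_filter => /andP [nb /BA ma].
    have nmb : ~ mus f i.+1 j.+1 s t by move/BB; apply/negP.
    case: (classic (mus f i.+1 j s t)) => mu.
      by exists 0 => //; apply: right_rem.
    case: (left_add ma mu) => h; [by exists 1|by exists 2|by exists 3].
  + move=> [|[|[|m]]].
    * exact: Rrem_ss.
    * exact: Lstart_ss.
    * exact: LX_ss.
    * exact: LY_ss.
- apply: (count_ss (k := 4) (Q := fun m x => match m with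
     | 0 => Lrem f i j x | 1 => Rend f i.+1 j x | 2 => RX f i.+1 j x | _ => RY f i.+1 j x end)).
  + exact/filter_uniq/uniqMUS.
  + move=> [s t]; rewrite mem_filter => /andP [na /BB mb].
    have nma : ~ mus f i j s t by move/BA; apply/negP.
    case: (classic (mus f i.+1 j s t)) => mu.
      by exists 0 => //; apply: left_rem.
    case: (right_add mb mu) => h; [by exists 1|by exists 2|by exists 3].
  + move=> [|[|[|m]]].
    * exact: Lrem_ss.
    * exact: Rend_ss.
    * exact: RX_ss.
    * exact: RY_ss.
Qed.
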